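(* Let $H$ be either $\mathrm{Sym}(m)$ acting on the set $\Delta$ of $k$-element subsets of $\{1,\ldots,m\}$, where $m\ge 5$ and $1\le k<m/2$, or $\mathrm{P\Gamma L}_d(q)$ acting on the set $\Delta$ of points (one-dimensional subspaces) of the projective space $\mathrm{PG}_{d-1}(q)$, where $d\ge 2$ and $q\ge 4$ is a prime power; let $r=|\Delta|$. Let $\ell\ge 1$ and let $G=H\wr \mathrm{Sym}(\ell)$ act in product action on $\Omega=\Delta^\ell$. Suppose that $G$ contains a permutation $g=y\sigma$ having at most four cycles on $\Omega$, where $y\in H^\ell$ (the base group), $\sigma\in\mathrm{Sym}(\ell)$, and $\sigma\neq 1$. Then $\sigma$ is a transposition, and either $r\in\{5,6,7,8\}$ and $\ell=2$, or $r\in\{5,8\}$ and $\ell=3$.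
   Context: Elements of $G=H\wr\mathrm{Sym}(\ell)$ are written $(h_1,\ldots,h_\ell)\sigma$ with $h_i\in H$ and $\sigma\in\mathrm{Sym}(\ell)$; in the product action, $H^\ell$ acts coordinatewise on $\Delta^\ell$ and $\mathrm{Sym}(\ell)$ permutes the coordinates. The number of cycles of a permutation is the number of orbits of the cyclic group it generates, fixed points included. *)

(* Defs.v *)
From HB Require Import structures.
From mathcomp Require Import all_boot all_order all_algebra all_fingroup.
Set Implicit Arguments. Unset Strict Implicit. Unset Printing Implicit Defensive.
Import GRing.Theory.
Local Open Scope ring_scope.

(* The element (h_1,...,h_l) sigma acts (on the right, as in the paper) by
   omega^{y sigma} = (omega^y)^sigma, i.e. coordinate i of omega is first moved
   by h_i and then placed in coordinate i^sigma:
   (omega^{y sigma})_j = (omega_{j sigma^-1})^{h_{j sigma^-1}}. *)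
Definition wr_fun (D : finType) (l : nat) (y : 'I_l -> {perm D}) (s : {perm 'I_l})
  (w : {ffun 'I_l -> D}) : {ffun 'I_l -> D} :=
  [ffun j => y ((s^-1)%g j) (w ((s^-1)%g j))].

Lemma wr_fun_inj (D : finType) (l : nat) (y : 'I_l -> {perm D}) (s : {perm 'I_l}) :
  injective (wr_fun y s).
Proof.
move=> w1 w2 E; apply/ffunP => i.
have := congr1 (fun f : {ffun 'I_l -> D} => f (s i)) E; rewrite /wr_fun !ffunE.
by rewrite -permM mulgV perm1 => /perm_inj.
Qed.

Definition wr_perm (D : finType) (l : nat) (y : 'I_l -> {perm D}) (s : {perm 'I_l})
  : {perm {ffun 'I_l -> D}} := perm (@wr_fun_inj D l y s).

Definition ncycles (T : finType) (g : {perm T}) : nat := #|porbits g|.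

Definition ksub (m k : nat) := {A : {set 'I_m} | #|A| == k}.

Definition in_Sym_ksub (m k : nat) (p : {perm ksub m k}) : Prop :=
  exists s : {perm 'I_m}, forall A : ksub m k, val (p A) = (s @: val A)%g.

Definition proj_points (F : finFieldType) (d : nat) :=
  {S : {set 'rV[F]_d} | [exists v : 'rV[F]_d, (v != 0) && (S == [set a *: v | a : F])]}.

Definition in_PGammaL (F : finFieldType) (d : nat) (p : {perm proj_points F d}) : Prop :=
  exists (A : 'M[F]_d) (tau : {rmorphism F -> F}),
    A \in unitmx /\ bijective tau /\
    forall S : proj_points F d, val (p S) = [set map_mx tau v *m A | v in val S].

Definition prop5p2_concl (r l : nat) (s : {perm 'I_l}) : Prop :=
  (exists i j : 'I_l, i != j /\ s = tperm i j) /\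
  ((r \in [:: 5; 6; 7; 8]%N /\ l = 2%N) \/ (r \in [:: 5; 8]%N /\ l = 3%N)).

(* Main.v *)
Require Import Defs.
From HB Require Import structures.
From mathcomp Require Import all_boot all_order all_algebra all_fingroup.
From mathcomp Require Import zify.
Set Implicit Arguments. Unset Strict Implicit. Unset Printing Implicit Defensive.

Local Open Scope group_scope.

Section Gen.
Variable T : finType.
Implicit Types g : {perm T}.

Lemma permX_S g j a : (g ^+ j.+1) a = g ((g ^+ j) a).
Proof. by rewrite expgSr permM. Qed.

Lemma inv_orbit U g (f : T -> U) a b :
  (forall c, f (g c) = f c) -> b \in porbit g a -> f b = f a.
Proof.
move=> fi /porbitP[i ->]; elim: i => [|i IH]; first by rewrite expg0 perm1.
by rewrite permX_S fi.
Qed.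

Lemma card_imset_factor (U1 U2 : finType) (F1 : T -> U1) (F2 : T -> U2) (A : {set T}) :
  (forall a b, a \in A -> b \in A -> F1 a = F1 b -> F2 a = F2 b) ->
  #|F2 @: A| <= #|F1 @: A|.
Proof.
move=> H.
case: (set_0Vmem A) => [->|[a0 a0A]]; first by rewrite !imset0 !cards0.
pose Psi (u : U1) := F2 (odflt a0 [pick a in A | F1 a == u]).
have -> : F2 @: A = Psi @: (F1 @: A).
  rewrite -imset_comp; apply/setP=> v; apply/imsetP/imsetP=> -[a aA ->];
    exists a => //; rewrite /Psi /=; case: pickP => [b /andP[bA /eqP]|/(_ a)].
  - by move=> E; rewrite /= (H b a bA aA E).
  - by rewrite aA eqxx.
  - by move=> E; rewrite /= (H b a bA aA E).
  - by rewrite aA eqxx.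
exact: leq_imset_card.
Qed.

Lemma GL (U : finType) (f : T -> U) g (A : {set T}) :
  (forall c, f (g c) = f c) -> #|f @: A| <= ncycles g.
Proof.
move=> fi; apply: (@leq_trans #|porbit g @: A|).
  apply: card_imset_factor => a b _ _ E.
  have : b \in porbit g a by rewrite E porbit_id.
  by move/(inv_orbit fi).
rewrite /ncycles /porbits; apply: subset_leq_card; apply/subsetP => O /imsetP[a _ ->]; exact: imset_f.
Qed.

Lemma GLseq (U : eqType) (f : T -> U) g (ps : seq T) :
  (forall c, f (g c) = f c) -> uniq (map f ps) -> size ps <= ncycles g.
Proof.
move=> fi Hu.
have Hu2 : uniq (map (porbit g) ps).
  elim: ps Hu => [//|p ps IH] /= /andP[Hp Hu]; rewrite IH // andbT.
  apply: contra Hp => /mapP[q qps E]; apply/mapP; exists q => //.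
  have : p \in porbit g q by rewrite -E porbit_id.
  by move/(inv_orbit fi) => ->.
rewrite /ncycles -(size_map (porbit g)) -(card_uniqP Hu2).
apply: subset_leq_card; apply/subsetP => O /mapP[q _ ->].
by rewrite /porbits imset_f.
Qed.

Lemma ncycles_pow g k : ncycles g <= ncycles (g ^+ k).
Proof.
have H := (@GL _ (porbit g) (g ^+ k) [set: T] (fun c => porbit_perm g k c)). apply: leq_trans H.
rewrite /ncycles /porbits; apply: subset_leq_card; apply/subsetP => O /imsetP[a _ ->].
by apply: imset_f; rewrite inE.
Qed.

Lemma fiber_count (U : finType) (F : T -> U) (S : {set T}) M :
  (forall a, a \in S -> #|[set b in S | F b == F a]| <= M) -> #|S| <= M * #|F @: S|.
Proof.
move=> H.
rewrite -sum1_card (partition_big_imset F) /= mulnC -sum_nat_const.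
apply: leq_sum => O /imsetP[a aS ->].
rewrite sum1_card; apply: leq_trans (H a aS); apply: subset_leq_card.
by apply/subsetP => b; rewrite !inE.
Qed.

Lemma porbit_pow_sub g m a : 0 < m -> (g ^+ m) a = a ->
  porbit g a \subset [set (g ^+ (val j)) a | j : 'I_m].
Proof.
move=> m0 Hm; apply/subsetP => b /porbitP[i ->].
have Hq q : (g ^+ (m * q)) a = a.
  elim: q => [|q IH]; first by rewrite muln0 expg0 perm1.
  by rewrite mulnS expgD permM Hm.
case: m m0 Hm Hq => [//|m] _ Hm Hq.
apply/imsetP; exists (Ordinal (ltn_pmod i (ltn0Sn m))) => //=.
by rewrite {1}(divn_eq i m.+1) expgD permM mulnC Hq.
Qed.

Lemma orbit_size g (S : {set T}) m : 0 < m ->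
  (forall a, a \in S -> (g ^+ m) a = a) -> #|S| <= m * #|porbit g @: S|.
Proof.
move=> m0 H; apply: fiber_count => a aS.
apply: (@leq_trans #|porbit g a|).
  apply: subset_leq_card; apply/subsetP => b; rewrite !inE => /andP[_ /eqP E].
  by rewrite -E porbit_id.
apply: (leq_trans (subset_leq_card (porbit_pow_sub m0 (H a aS)))).
by apply: (leq_trans (leq_imset_card _ _)); rewrite card_ord.
Qed.

End Gen.

Lemma porbit_cardX (T : finType) (h : {perm T}) a : (h ^+ #|porbit h a|) a = a.
Proof. by rewrite permX iter_porbit. Qed.

Lemma pow_mod_porbit (T : finType) (h : {perm T}) a j :
  (h ^+ j) a = (h ^+ (j %% #|porbit h a|)) a.
Proof.
set n := #|porbit h a|.
have Hq q : (h ^+ (n * q)) a = a.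
  elim: q => [|q IH]; first by rewrite muln0 expg0 perm1.
  by rewrite mulnS expgD permM porbit_cardX.
by rewrite {1}(divn_eq j n) expgD permM mulnC Hq.
Qed.

Lemma pow_fix_div (T : finType) (h : {perm T}) a j :
  (h ^+ j) a = a -> #|porbit h a| %| j.
Proof.
rewrite pow_mod_porbit => E.
set n := #|porbit h a| in E *.
have n0 : 0 < n by rewrite lt0n card_porbit_neq0.
rewrite /dvdn; apply/eqP; apply/eqP; apply/negPn/negP => r0.
have U := uniq_traject_porbit h a; rewrite -/n in U.
have := @nth_uniq _ a _ 0 (j %% n) _ _ U.
rewrite size_traject n0 ltn_pmod // => /(_ isT isT).
rewrite (nth_traject _ n0) (nth_traject _ (ltn_pmod _ n0)) -!permX E expg0 perm1 eqxx eq_sym.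
by rewrite (negbTE r0).
Qed.

Section Equiv.
Variables (T T' : finType) (g : {perm T}) (K : {perm T'}) (pi : T -> T').
Hypothesis pi_eq : forall a, pi (g a) = K (pi a).

Lemma equiv_iter j a : pi ((g ^+ j) a) = (K ^+ j) (pi a).
Proof.
elim: j => [|j IH]; first by rewrite !expg0 !perm1.
by rewrite !permX_S pi_eq IH.
Qed.

Lemma equiv_surj : (forall b, exists a, pi a = b) -> ncycles K <= ncycles g.
Proof.
move=> Hs.
have H := (@GL _ _ (fun a => porbit K (pi a)) g [set: T]
             (fun c => etrans (congr1 _ (pi_eq c)) (porbit_perm K 1 (pi c)))).
apply: leq_trans H; rewrite /ncycles /porbits; apply: subset_leq_card.
apply/subsetP => O /imsetP[b _ ->]; have [a <-] := Hs b.
by apply/imsetP; exists a; rewrite ?inE.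
Qed.

Variables (T2 : finType) (K2 : {perm T2}) (pi2 : T -> T2).
Hypothesis pi2_eq : forall a, pi2 (g a) = K2 (pi2 a).

Lemma equiv_prod : (forall b1 b2, exists a, pi a = b1 /\ pi2 a = b2) ->
  ncycles K * ncycles K2 <= ncycles g.
Proof.
move=> Hs.
have H := (@GL _ _ (fun a => (porbit K (pi a), porbit K2 (pi2 a))) g [set: T]
   (fun c => etrans (congr2 pair (etrans (congr1 _ (pi_eq c)) (porbit_perm K 1 (pi c)))
                                 (etrans (congr1 _ (pi2_eq c)) (porbit_perm K2 1 (pi2 c))))
                     (erefl _))).
apply: leq_trans H; rewrite /ncycles -cardsX; apply: subset_leq_card.
apply/subsetP => -[O1 O2]; rewrite inE /= => /andP[/imsetP[b1 _ E1] /imsetP[b2 _ E2]].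
have [a [A1 A2]] := Hs b1 b2; rewrite E1 E2 -A1 -A2.
by apply/imsetP; exists a; rewrite ?inE.
Qed.

Lemma slice (D : finType) (h : {perm D}) (kap : T -> D) c0 :
  (forall a, kap (g a) = h (kap a)) ->
  (forall t, exists a, pi a = t /\ kap a = c0) ->
  porbit h c0 = [set: D] ->
  ncycles (K ^+ #|D|) <= ncycles g.
Proof.
move=> kap_eq Hs Htr.
have kap_iter j a : kap ((g ^+ j) a) = (h ^+ j) (kap a).
  elim: j => [|j IH]; first by rewrite !expg0 !perm1.
  by rewrite !permX_S kap_eq IH.
pose A := [set a | kap a == c0].
have H1 : #|(fun a => porbit (K ^+ #|D|) (pi a)) @: A| <= #|porbit g @: A|.
  apply: card_imset_factor => a b; rewrite !inE => /eqP ka /eqP kb E.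
  have : b \in porbit g a by rewrite E porbit_id.
  case/porbitP => j bj.
  have := kap_iter j a; rewrite -bj ka kb => /esym/pow_fix_div.
  rewrite Htr cardsT => /dvdnP[q jq].
  rewrite bj equiv_iter jq mulnC expgM.
  by rewrite porbit_perm.
apply: leq_trans (leq_trans H1 _).
  rewrite /ncycles /porbits; apply: subset_leq_card.
  apply/subsetP => O /imsetP[t _ ->]; have [a [<- ka]] := Hs t.
  by apply/imsetP; exists a; rewrite ?inE ?ka.
rewrite /ncycles /porbits; apply: subset_leq_card.
by apply/subsetP => O /imsetP[a _ ->]; apply: imset_f.
Qed.

End Equiv.

Local Close Scope group_scope.

Local Open Scope group_scope.

Section Pair.
Variables (D : finType) (x : {perm D}).

Definition Nfun (p : D * D) : D * D := (x p.2, p.1).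
Lemma Nfun_inj : injective Nfun.
Proof. by move=> [a1 b1] [a2 b2] [/perm_inj -> ->]. Qed.
Definition Nperm := perm Nfun_inj.
Lemma NpermE p : Nperm p = (x p.2, p.1).
Proof. by rewrite permE. Qed.

Lemma Npow_even k p : (Nperm ^+ k.*2) p = ((x ^+ k) p.1, (x ^+ k) p.2).
Proof.
elim: k p => [|k IH] [a b]; first by rewrite !expg0 !perm1.
by rewrite doubleS !permX_S IH !NpermE /=.
Qed.

Lemma Npow_odd k p : (Nperm ^+ k.*2.+1) p = ((x ^+ k.+1) p.2, (x ^+ k) p.1).
Proof. by rewrite permX_S Npow_even NpermE /= permX_S. Qed.

Definition rep a := odflt a [pick b in porbit x a].

Lemma rep_in a : rep a \in porbit x a.
Proof.
rewrite /rep; case: pickP => [b //|/(_ a)]; by rewrite porbit_id.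
Qed.

Lemma same_porbit a b : b \in porbit x a -> porbit x b = porbit x a.
Proof. by rewrite -eq_porbit_mem => /eqP. Qed.

Lemma rep_eq a b : b \in porbit x a -> rep b = rep a.
Proof.
move=> ba; rewrite /rep (same_porbit ba).
case: pickP => [//|/(_ a)]; by rewrite porbit_id.
Qed.

Lemma pow_comm_fix r a k : a \in porbit x r -> (x ^+ k) r = r -> (x ^+ k) a = a.
Proof.
case/porbitP => e -> H.
by rewrite -permM -expgD addnC expgD permM H.
Qed.

Lemma powpow a i j : (x ^+ i) ((x ^+ j) a) = (x ^+ (i + j)) a.
Proof. by rewrite -permM -expgD addnC. Qed.

Lemma card_le2 (A : {set D}) a0 :
  (forall b c, b \in A -> c \in A -> b != a0 -> c != a0 -> b = c) -> #|A| <= 2.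
Proof.
move=> H; case: (pickP [pred b in A | b != a0]) => [b /andP[bA ba]|Hn].
  apply: (@leq_trans #|[set a0; b]|); last by rewrite cards2; case: (a0 != b).
  apply: subset_leq_card; apply/subsetP => c cA; rewrite !inE.
  by case: eqP => //= /eqP ca; rewrite (H c b).
apply: (@leq_trans #|[set a0]|); last by rewrite cards1.
apply: subset_leq_card; apply/subsetP => c cA; rewrite !inE.
by move: (Hn c); rewrite /= cA /= => /negbFE.
Qed.

Definition FN a := porbit Nperm (rep a, a).

Lemma FN_fiber a a' : FN a' = FN a ->
  a' = a \/ exists k, (x ^+ k.+1) a = rep a /\ a' = (x ^+ k) (rep a).
Proof.
move=> E.
have : (rep a', a') \in FN a by rewrite -E /FN porbit_id.
case/porbitP => j; rewrite -(odd_double_half j).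
have ra : rep a \in porbit x a := rep_in a.
have ar : a \in porbit x (rep a) by rewrite porbit_sym.
case: (odd j) => /=.
  rewrite add1n Npow_odd /= => -[E1 E2].
  have : a' \in porbit x a by rewrite E2 -(same_porbit ra) mem_porbit.
  move/rep_eq; rewrite E1 => H; right; exists j./2; split => //.
rewrite add0n Npow_even /= => -[E1 E2].
have : a' \in porbit x a by rewrite E2 mem_porbit.
move/rep_eq; rewrite E1 => H.
by left; rewrite E2 (pow_comm_fix ar H).
Qed.

Lemma FN_bound : #|D| <= 2 * #|FN @: [set: D]|.
Proof.
rewrite -cardsT; apply: fiber_count => a _.
apply: (card_le2 (a0 := a)) => b c; rewrite !inE => /eqP Eb /eqP Ec nb nc.
case: (FN_fiber Eb) => [/eqP|[k1 [H1 ->]]]; first by rewrite (negbTE nb).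
case: (FN_fiber Ec) => [/eqP|[k2 [H2 ->]]]; first by rewrite (negbTE nc).
by rewrite -{1}H2 -H1 !powpow !addnS addnC.
Qed.

Lemma FN_sub : FN @: [set: D] \subset porbits Nperm.
Proof. by apply/subsetP => O /imsetP[a _ ->]; rewrite /FN /porbits imset_f. Qed.

Lemma N_bound : #|D| <= 2 * ncycles Nperm.
Proof.
apply: (leq_trans FN_bound); rewrite leq_mul2l /=.
exact: subset_leq_card FN_sub.
Qed.

Lemma N_bound2 a b : b \notin porbit x a -> (#|D| + 2 <= 2 * ncycles Nperm)%N.
Proof.
move=> nb.
pose same (p : D * D) := p.2 \in porbit x p.1.
have same_inv p : same (Nperm p) = same p.
  rewrite /same NpermE /=.
  have := porbit_perm x 1 p.2; rewrite expg1 => ->.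
  exact: porbit_sym.
have Hno : porbit Nperm (a, b) \notin FN @: [set: D].
  apply/imsetP => -[c _ E].
  have : (a, b) \in FN c by rewrite -E porbit_id.
  move/(inv_orbit same_inv); rewrite /same /= => E2.
  by move: nb; rewrite E2 porbit_sym rep_in.
have : #|porbit Nperm (a, b) |: FN @: [set: D]| <= ncycles Nperm.
  apply: subset_leq_card; apply/subsetP => O; rewrite !inE => /orP[/eqP ->|].
    by rewrite /porbits imset_f.
  by move/(subsetP FN_sub).
rewrite cardsU1 Hno add1n => H.
apply: leq_trans (leq_add FN_bound (leqnn 2)) _.
by rewrite -[X in (_ + X)%N](muln1 2) -mulnDr leq_mul2l /= addn1.
Qed.

Lemma N2_bound : #|D| <= ncycles (Nperm ^+ 2).
Proof.
pose F a := porbit (Nperm ^+ 2) (rep a, a).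
apply: (@leq_trans (1 * #|F @: [set: D]|)).
  rewrite -cardsT; apply: fiber_count => a _.
  apply: (@leq_trans #|[set a]|); last by rewrite cards1.
  apply: subset_leq_card; apply/subsetP => a'; rewrite !inE => /eqP E.
  have : (rep a', a') \in F a by rewrite -E /F porbit_id.
  case/porbitP => j; rewrite -expgM mul2n Npow_even /= => -[E1 E2].
  have ar : a \in porbit x (rep a) by rewrite porbit_sym rep_in.
  have : a' \in porbit x a by rewrite E2 mem_porbit.
  move/rep_eq; rewrite E1 => H.
  by rewrite E2 (pow_comm_fix ar H).
rewrite mul1n; apply: subset_leq_card.
by apply/subsetP => O /imsetP[a _ ->]; rewrite /F /porbits imset_f.
Qed.

End Pair.

Local Close Scope group_scope.

Local Open Scope group_scope.

Lemma sum_if_lt0 (p q : bool) n k :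
  (\sum_(m < n) (if (m < k)%N then p else q) = p * minn k n + q * (n - minn k n))%N.
Proof.
elim: n => [|n IH]; first by rewrite big_ord0 minn0 !muln0.
rewrite big_ord_recr /= IH.
case: (boolP (n < k)) => nk.
  have -> : minn k n = n by lia.
  have -> : minn k n.+1 = n.+1 by lia.
  rewrite subnn; clear IH; case: p; case: q => /=; lia.
rewrite -leqNgt in nk.
have -> : minn k n = k by lia.
have -> : minn k n.+1 = k by lia.
clear IH; case: p; case: q => /=; lia.
Qed.

Lemma sum_if_lt (p q : bool) n k : k <= n ->
  (\sum_(m < n) (if (m < k)%N then p else q) = p * k + q * (n - k))%N.
Proof. by move=> kn; rewrite sum_if_lt0 (minn_idPl kn). Qed.

Section Cyc.
Variables (D : finType) (x : {perm D}) (L' : nat).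
Notation L := L'.+1.
Notation W := {ffun 'I_L -> D}.

Definition Kfun (u : W) : W :=
  [ffun m : 'I_L => if val m is k.+1 then u (inord k) else x (u ord_max)].

Lemma Kfun_inj : injective Kfun.
Proof.
move=> u1 u2 E; apply/ffunP => m.
case: (ltnP m L') => Hm.
  have := congr1 (fun f : W => f (inord m.+1)) E; rewrite !ffunE /= inordK //=.
  by rewrite inord_val.
have -> : m = ord_max by apply/val_inj => /=; move: (ltn_ord m); lia.
by have := congr1 (fun f : W => f ord0) E; rewrite !ffunE /= => /perm_inj.
Qed.

Definition Kperm := perm Kfun_inj.
Lemma KpermE u m : Kperm u m = if val m is k.+1 then u (inord k) else x (u ord_max).
Proof. by rewrite permE ffunE. Qed.

Lemma Kpow j u m : j <= L ->
  (Kperm ^+ j) u m = if j <= m then u (inord (m - j)) else x (u (inord (m + L - j))).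
Proof.
elim: j m => [|j IH] m jL.
  by rewrite expg0 perm1 leq0n subn0 inord_val.
rewrite permX_S KpermE.
case: m => [[|k] km] /=.
  rewrite IH ?(ltnW jL) //=.
  have -> : j <= L' by lia.
  congr (x (u _)); apply/val_inj; rewrite /= !inordK //; lia.
rewrite IH ?(ltnW jL) // inordK; last by lia.
rewrite ltnS; case: (leqP j k) => jk.
  by congr (u _); apply/val_inj; rewrite /= !inordK //; lia.
by congr (x (u _)); apply/val_inj; rewrite /= !inordK //; lia.
Qed.

Lemma Kpow_L u : (Kperm ^+ L) u = [ffun m => x (u m)].
Proof.
apply/ffunP => m; rewrite Kpow // ffunE leqNgt ltn_ord /=.
by rewrite addnK inord_val.
Qed.

Lemma Kpow_Lq q u : (Kperm ^+ (L * q)) u = [ffun m => (x ^+ q) (u m)].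
Proof.
elim: q u => [|q IH] u; first by rewrite muln0 expg0 perm1; apply/ffunP => m; rewrite ffunE expg0 perm1.
rewrite mulnS expgD permM IH Kpow_L; apply/ffunP => m; rewrite !ffunE.
by rewrite expgS permM.
Qed.

Definition phi (C : {set D}) (u : W) := (\sum_(m < L) (u m \in C))%N.

Lemma phi_K (C : {set D}) : (forall a, (x a \in C) = (a \in C)) -> forall u, phi C (Kperm u) = phi C u.
Proof.
move=> HC u; rewrite /phi big_ord_recl [RHS]big_ord_recr /= KpermE /= HC addnC.
congr (_ + _)%N; apply: eq_bigr => i _; rewrite KpermE /=.
by rewrite add0n; congr (u _ \in C); apply/val_inj; rewrite /= inordK // ltnS ltnW.
Qed.

Definition wk a b k : W := [ffun m : 'I_L => if (val m < k)%N then a else b].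

Lemma phi_wk (C : {set D}) a b k : k <= L ->
  phi C (wk a b k) = ((a \in C) * k + (b \in C) * (L - k))%N.
Proof.
move=> kL; rewrite /phi -(sum_if_lt _ _ kL).
apply: eq_bigr => i _; rewrite ffunE; by case: ifP.
Qed.


Lemma pow5 k : 2 <= k -> 4 * k.+1 < 5 ^ k.
Proof.
elim: k => [//|k IH] Hk.
case: k IH Hk => [|[|k]] IH Hk //.
move: (IH isT); rewrite (expnS 5 k.+2); set e := (5 ^ k.+2)%N; lia.
Qed.

Lemma HC_porbit a z : (x z \in porbit x a) = (z \in porbit x a).
Proof.
rewrite porbit_sym [RHS]porbit_sym.
by have := porbit_perm x 1 z; rewrite expg1 => ->.
Qed.

Lemma fix_small z : #|porbit x z| <= 1 -> x z = z.
Proof.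
move=> H; apply/eqP; apply/negPn/negP => nz.
have : #|[set z; x z]| <= #|porbit x z|.
  apply: subset_leq_card; apply/subsetP => w; rewrite !inE => /orP[]/eqP->.
    exact: porbit_id.
  by rewrite HC_porbit porbit_id.
by rewrite cards2 eq_sym nz; move/leq_trans/(_ H).
Qed.

Lemma K_bound : 5 <= #|D| -> 2 <= L' -> 5 <= ncycles Kperm.
Proof.
move=> n5 L2.
case: (boolP [exists a, exists b, b \notin porbit x a]) => [/existsP[a /existsP[b nb]]|Htr].
  pose C := porbit x a.
  have HC z : (x z \in C) = (z \in C) by apply: HC_porbit.
  have aC : a \in C by apply: porbit_id.
  case: (ltnP 2 L') => L3.
    have := @GLseq _ _ (phi C) Kperm [:: wk a b 0; wk a b 1; wk a b 2; wk a b 3; wk a b 4] (phi_K HC).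
    rewrite /= !phi_wk //; try lia.
    rewrite aC (negbTE nb) !mul1n !mul0n !addn0; exact.
  have L'2 : L' = 2 by lia.
  move: (L'2) => L'2'.
  case: (boolP [exists a', (1 < #|porbit x a'|) && [exists b', b' \notin porbit x a']]).
    case/existsP => a' /andP[c2 /existsP[b' nb']].
    pose C' := porbit x a'; pose c := #|C'|.
    have HC' z : (x z \in C') = (z \in C') by apply: HC_porbit.
    have aC' : a' \in C' by apply: porbit_id.
    pose S := [set u : W | [forall m, u m \in C']].
    have HS u : u \in S -> (Kperm ^+ (L * c)) u = u.
      rewrite inE => /forallP Hu; rewrite Kpow_Lq; apply/ffunP => m; rewrite ffunE.
      by apply: (pow_comm_fix (Hu m)); exact: porbit_cardX.
    have m0 : 0 < L * c by rewrite muln_gt0 /= /c /C'; lia.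
    have H1 := orbit_size m0 HS.
    have cardS : #|S| = (c ^ 3)%N.
      have -> : #|S| = #|@ffun_on 'I_L C'|.
        by apply: eq_card => u; rewrite inE; apply/forallP/ffun_onP.
      by rewrite card_ffun_on card_ord L'2.
    rewrite cardS in H1.
    pose A1 := porbit Kperm @: S.
    pose A2 := [set porbit Kperm (wk a' b' (val k)) | k : 'I_3].
    have phiw (k : 'I_3) : phi C' (wk a' b' k) = val k.
      rewrite phi_wk; last by rewrite L'2; apply: ltnW.
      by rewrite aC' (negbTE nb') mul1n mul0n addn0.
    have phiS u : u \in S -> phi C' u = 3.
      rewrite inE => /forallP Hu; rewrite /phi.
      rewrite (eq_bigr (fun _ => 1%N)); last by move=> i _; rewrite Hu.
      by rewrite sum1_card card_ord L'2.
    have cA2 : #|A2| = 3.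
      rewrite card_imset ?card_ord // => i j E.
      have : wk a' b' j \in porbit Kperm (wk a' b' i) by rewrite E porbit_id.
      move/(inv_orbit (phi_K HC')); rewrite !phiw => E2; exact: val_inj.
    have dis : A1 :&: A2 = set0.
      apply/setP => O; rewrite !inE; apply/negP => /andP[/imsetP[u uS ->] /imsetP[k _ E]].
      have : wk a' b' k \in porbit Kperm u by rewrite E porbit_id.
      move/(inv_orbit (phi_K HC')); rewrite phiw (phiS u uS) => Ek.
      by move: (ltn_ord k); rewrite Ek.
    have cA1 : 2 <= #|A1|.
      rewrite leqNgt; apply/negP => HA1.
      have H2 : (c ^ 3 <= L * c * 1)%N by apply: (leq_trans H1); rewrite leq_mul2l; apply/orP; right; exact: HA1.
      have c2' : 1 < c by [].
      move: H2 c2'; rewrite L'2; clearbody c; rewrite !expnS expn0; nia.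
    have : #|A1 :|: A2| <= ncycles Kperm.
      apply: subset_leq_card; apply/subsetP => O; rewrite inE => /orP[] /imsetP[u _ ->];
        by rewrite /porbits imset_f.
    rewrite cardsU dis cards0 subn0 cA2; lia.
  move=> Hb.
  have xid z : x z = z.
    apply: fix_small; rewrite leqNgt; apply/negP => zc.
    move: Hb; rewrite negb_exists => /forallP/(_ z); rewrite zc /= negb_exists => /forallP Hz.
    have Hall w : w \in porbit x z by move: (Hz w); rewrite negbK.
    have az : a \in porbit x z := Hall a.
    by move: nb; rewrite (same_porbit az) Hall.
  have ab : a != b by apply: contraNneq nb => <-; apply: porbit_id.
  have [c cn] : exists c, c \notin [set a; b].
    apply/existsP; rewrite -negb_forall; apply/negP => /forallP Hc.
    have : #|[set: D]| <= #|[set a; b]| by apply: subset_leq_card; apply/subsetP => w _; exact: Hc.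
    by rewrite cardsT cards2 ab; lia.
  move: cn; rewrite !inE negb_or => /andP[ca cb].
  have HCa z : (x z \in [set a]) = (z \in [set a]) by rewrite xid.
  have HCb z : (x z \in [set b]) = (z \in [set b]) by rewrite xid.
  have fi u : (phi [set a] (Kperm u), phi [set b] (Kperm u)) = (phi [set a] u, phi [set b] u).
    by rewrite (phi_K HCa) (phi_K HCb).
  have ab' : (a == b) = false by apply: negbTE.
  have ba' : (b == a) = false by rewrite eq_sym.
  have L3' : 3 <= L by rewrite L'2.
  have U : uniq (map (fun u => (phi [set a] u, phi [set b] u))
              [:: wk a b 3; wk a b 0; wk a b 2; wk a b 1; wk c c 0]).
    rewrite /= !phi_wk //; try lia.
    rewrite !inE !eqxx ab' ba' (negbTE ca) (negbTE cb) L'2 /=.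
    by [].
  exact: (GLseq fi U).
have Hall a b : b \in porbit x a.
  by move: Htr; rewrite negb_exists => /forallP/(_ a); rewrite negb_exists => /forallP/(_ b); rewrite negbK.
have xn a : (x ^+ #|D|) a = a.
  have Pa : porbit x a = [set: D] by apply/setP => b; rewrite inE Hall.
  have -> : #|D| = #|porbit x a| by rewrite Pa cardsT.
  exact: porbit_cardX.
have HS u : u \in [set: W] -> (Kperm ^+ (L * #|D|)) u = u.
  by move=> _; rewrite Kpow_Lq; apply/ffunP => m; rewrite ffunE xn.
have m0 : 0 < L * #|D| by rewrite muln_gt0 /= (leq_ltn_trans _ n5).
have H1 := orbit_size m0 HS.
have H2 : #|porbit Kperm @: [set: W]| <= ncycles Kperm.
  by apply: subset_leq_card; apply/subsetP => O /imsetP[u _ ->]; rewrite /porbits imset_f.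
rewrite cardsT card_ffun card_ord in H1.
rewrite leqNgt; apply/negP => H5.
have H3 : (#|D| ^ L'.+1 <= L * #|D| * 4)%N.
  apply: (leq_trans H1); rewrite leq_mul2l; apply/orP; right; exact: leq_trans H2 H5.
have H4 := pow5 L2.
have H6 : (5 ^ L' <= #|D| ^ L')%N by rewrite leq_exp2r //; lia.
move: H3; rewrite expnSr; set P := (#|D| ^ L')%N; set n := #|D|; nia.
Qed.

End Cyc.

Local Close Scope group_scope.

Local Open Scope group_scope.

Lemma wrE (D : finType) l (y : 'I_l -> {perm D}) (s : {perm 'I_l}) w j :
  wr_perm y s w j = y (s^-1 j) (w (s^-1 j)).
Proof. by rewrite permE /wr_fun ffunE. Qed.

Section Block.
Variables (D : finType) (l : nat) (y : 'I_l -> {perm D}) (s : {perm 'I_l}) (i0 : 'I_l).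
Variable L' : nat.
Hypothesis HL : #|porbit s i0| = L'.+1.
Notation L := L'.+1.

Definition jm m := (s ^+ m) i0.
Definition Z m := (\prod_(k < m) y (jm k)).
Definition xL := Z L.

Definition piB (w : {ffun 'I_l -> D}) : {ffun 'I_L -> D} :=
  [ffun m : 'I_L => (Z m)^-1 (w (jm m))].

Lemma ZS k : Z k.+1 = Z k * y (jm k).
Proof. by rewrite /Z big_ord_recr. Qed.

Lemma jmS k : jm k.+1 = s (jm k).
Proof. by rewrite /jm permX_S. Qed.

Lemma jm_inj (m1 m2 : 'I_L) : jm m1 = jm m2 -> m1 = m2.
Proof.
move=> E; apply/val_inj.
have U := uniq_traject_porbit s i0; rewrite HL in U.
have := @nth_uniq _ i0 _ m1 m2 _ _ U; rewrite size_traject !ltn_ord => /(_ isT isT).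
rewrite !nth_traject ?ltn_ord // -!permX -/(jm m1) -/(jm m2) E eqxx.
by move/esym/eqP.
Qed.

Lemma piB_eq w : piB (wr_perm y s w) = Kperm xL L' (piB w).
Proof.
apply/ffunP => m; rewrite KpermE !ffunE wrE.
case: m => [[|k] km] /=.
  have Hs : s (jm L') = i0 by rewrite -jmS /jm -HL porbit_cardX.
  have -> : jm 0 = i0 by rewrite /jm expg0 perm1.
  have -> : s^-1 i0 = jm L' by rewrite -Hs permK.
  rewrite /Z big_ord0 invg1 perm1 -/(Z L') /xL ZS permM permKV.
  by [].
rewrite jmS permK ZS invMg permM permK.
by rewrite ffunE inordK // ltnW.
Qed.

Lemma piB_surj u : exists w, piB w = u.
Proof.
exists [ffun j => if [pick m : 'I_L | jm m == j] is Some m then Z m (u m) else u ord0].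
apply/ffunP => m; rewrite !ffunE.
case: pickP => [m' /eqP /jm_inj -> |/(_ m)]; first by rewrite permK.
by rewrite eqxx.
Qed.

End Block.

Lemma block_bound (D : finType) l (y : 'I_l -> {perm D}) (s : {perm 'I_l}) i0 :
  5 <= #|D| -> 3 <= #|porbit s i0| -> 5 <= ncycles (wr_perm y s).
Proof.
move=> n5; case E: #|porbit s i0| => [//|L'] L3.
apply: leq_trans (@K_bound _ (xL y s i0 L') L' n5 _) _; first by lia.
apply: equiv_surj (piB_eq y E) _.
exact: piB_surj E.
Qed.

Local Close Scope group_scope.

Local Open Scope group_scope.

Section Prod.
Variables (D : finType) (z1 z2 : {perm D}).
Definition pfun (p : D * D) := (z1 p.1, z2 p.2).
Lemma pfun_inj : injective pfun.
Proof. by move=> [a1 b1] [a2 b2] [/perm_inj -> /perm_inj ->]. Qed.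
Definition pprod := perm pfun_inj.
Lemma pprodE p : pprod p = (z1 p.1, z2 p.2).
Proof. by rewrite permE. Qed.
Lemma pprodX j p : (pprod ^+ j) p = ((z1 ^+ j) p.1, (z2 ^+ j) p.2).
Proof.
elim: j p => [|j IH] [a b]; first by rewrite !expg0 !perm1.
by rewrite !permX_S IH pprodE.
Qed.
End Prod.

Definition transitive (D : finType) (z : {perm D}) := [forall a, forall b, b \in porbit z a].

Lemma ntrans_ex (D : finType) (z : {perm D}) :
  ~~ transitive z -> exists a b, b \notin porbit z a.
Proof.
rewrite /transitive negb_forall => /existsP[a]; rewrite negb_forall => /existsP[b nb].
by exists a, b.
Qed.

Lemma trans_all (D : finType) (z : {perm D}) a : transitive z -> porbit z a = [set: D].
Proof. by move=> /forallP/(_ a)/forallP H; apply/setP => b; rewrite inE H. Qed.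

Lemma trans_pow (D : finType) (z : {perm D}) a : transitive z -> (z ^+ #|D|) a = a.
Proof.
move=> Ht; have := porbit_cardX z a; by rewrite (trans_all a Ht) cardsT.
Qed.

Lemma ncycles2 (D : finType) (z : {perm D}) a b : b \notin porbit z a -> 2 <= ncycles z.
Proof.
move=> nb.
have fi c : porbit z (z c) = porbit z c by have := porbit_perm z 1 c; rewrite expg1.
have := @GLseq _ _ (porbit z) z [:: a; b] fi.
rewrite /= andbT inE; apply.
by apply: contra nb => /eqP ->; apply: porbit_id.
Qed.

Lemma pprod_bound (D : finType) (z1 z2 : {perm D}) : 2 <= #|D| -> 2 <= ncycles (pprod z1 z2).
Proof.
move=> n2.
have [c _] := card_gt0P (ltnW n2).
case: (boolP (transitive z1)) => [t1|/ntrans_ex[a [b nb]]]; last first.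
  pose f (p : D * D) := porbit z1 p.1.
  have fi p : f (pprod z1 z2 p) = f p.
    by rewrite /f pprodE /=; have := porbit_perm z1 1 p.1; rewrite expg1.
  have := @GLseq _ _ f (pprod z1 z2) [:: (a, c); (b, c)] fi.
  rewrite /= andbT inE /f /=; apply.
  by apply: contra nb => /eqP ->; apply: porbit_id.
case: (boolP (transitive z2)) => [t2|/ntrans_ex[a [b nb]]]; last first.
  pose f (p : D * D) := porbit z2 p.2.
  have fi p : f (pprod z1 z2 p) = f p.
    by rewrite /f pprodE /=; have := porbit_perm z2 1 p.2; rewrite expg1.
  have := @GLseq _ _ f (pprod z1 z2) [:: (c, a); (c, b)] fi.
  rewrite /= andbT inE /f /=; apply.
  by apply: contra nb => /eqP ->; apply: porbit_id.
have HS p : p \in [set: D * D] -> (pprod z1 z2 ^+ #|D|) p = p.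
  by move=> _; case: p => a b; rewrite pprodX /= !trans_pow.
have m0 : 0 < #|D| by lia.
have H1 := orbit_size m0 HS.
rewrite cardsT card_prod in H1.
have H2 : #|porbit (pprod z1 z2) @: [set: D * D]| <= ncycles (pprod z1 z2).
  by apply: subset_leq_card; apply/subsetP => O /imsetP[u _ ->]; rewrite /porbits imset_f.
rewrite leq_mul2l in H1; move: H1 => /orP[]; first by lia.
move=> H; apply: leq_trans n2 (leq_trans H H2).
Qed.

Section Main.
Variables (D : finType) (l : nat) (y : 'I_l -> {perm D}) (s : {perm 'I_l}).

Definition piP i i' (w : {ffun 'I_l -> D}) : D * D := (w i, (y i)^-1 (w i')).

Lemma piP_eq i w : s (s i) = i ->
  piP i (s i) (wr_perm y s w) = Nperm (y i * y (s i)) (piP i (s i) w).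
Proof.
move=> ssi; rewrite /piP NpermE /= !wrE permK.
have -> : s^-1 i = s i by rewrite -{1}ssi permK.
by rewrite permK permM permKV.
Qed.

Lemma fix_eq k w : s k = k -> wr_perm y s w k = y k (w k).
Proof. by move=> sk; rewrite wrE -{1 2}sk permK. Qed.

Lemma main_comb : 5 <= #|D| -> s != 1 -> ncycles (wr_perm y s) <= 4 -> prop5p2_concl #|D| s.
Proof.
move=> n5 s1 H4.
set g := wr_perm y s in H4 *.
have Hb j : #|porbit s j| <= 2.
  rewrite leqNgt; apply/negP => j3; have := block_bound y n5 j3; rewrite -/g; lia.
have s2 j : s (s j) = j.
  move: (porbit_cardX s j) (Hb j) (card_porbit_neq0 s j).
  case: #|_| => [|[|[|c]]] //.
    by rewrite expg1 => E _ _; rewrite !E.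
  by rewrite permX_S expg1 => E _ _.
have [i si] : exists i, s i != i.
  case: (pickP (fun i => s i != i)) => [i si|Hn]; first by exists i.
  have s1' : s = 1 by apply/permP => k; rewrite perm1; apply/eqP; exact: negbFE (Hn k).
  by rewrite s1' eqxx in s1.
set i' := s i.
have si' : s i' = i := s2 i.
have ii' : i != i' by rewrite eq_sym.
pose x := y i * y i'.
have piE w : piP i i' (g w) = Nperm x (piP i i' w) by apply: piP_eq.
have i'i : (i' == i) = false by rewrite eq_sym; apply: negbTE.
have piS p : exists w, piP i i' w = p.
  case: p => a b; exists [ffun t => if t == i then a else y i b].
  by rewrite /piP !ffunE eqxx i'i permK.
have HN : ncycles (Nperm x) <= ncycles g := equiv_surj piE piS.
have N3 : 3 <= ncycles (Nperm x) by have := N_bound x; lia.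
have n8 : #|D| <= 8 by have := N_bound x; lia.
case: (pickP (fun j => [&& s j != j, j != i & j != i'])) => [j /and3P[sj ji ji'] | Hn].
  exfalso.
  set j' := s j.
  have sj' : s j' = j := s2 j.
  have j'i : j' != i.
    apply: contraNneq ji' => E; by rewrite -(s2 j) -/j' E.
  have j'i' : j' != i' by apply: contraNneq ji; rewrite /j' /i' => /perm_inj /eqP.
  have j'j : j' != j by [].
  pose x2 := y j * y j'.
  have pjE w : piP j j' (g w) = Nperm x2 (piP j j' w) by apply: piP_eq.
  have Hs b1 b2 : exists w, piP i i' w = b1 /\ piP j j' w = b2.
    case: b1 b2 => [a1 c1] [a2 c2].
    exists [ffun t => if t == i then a1 else if t == i' then y i c1
                      else if t == j then a2 else y j c2].
    rewrite /piP !ffunE eqxx i'i eqxx (negbTE ji) (negbTE ji') eqxx.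
    by rewrite (negbTE j'i) (negbTE j'i') (negbTE j'j) !permK.
  have := equiv_prod piE pjE Hs.
  have := N_bound x2; lia.
have Hfix j : j != i -> j != i' -> s j = j.
  by move=> ji ji'; move: (Hn j); rewrite ji ji' !andbT; case: eqP.
have Hs : s = tperm i i'.
  apply/permP => j; case: tpermP => [->|->|ji ji'] //.
  by apply: Hfix; apply/eqP.
split; first by exists i, i'.
have Nb := N_bound x.
case: (pickP (fun k => (k != i) && (k != i'))) => [k /andP[ki ki'] | Hn2]; last first.
  left; split.
    rewrite !inE; lia.
  have : [set: 'I_l] = [set i; i'].
    apply/setP => t; rewrite !inE; move: (Hn2 t).
    by case: (t =P i) => //= _; case: (t =P i').
  by move/(congr1 (fun A : {set 'I_l} => #|A|)); rewrite cardsT card_ord cards2 ii'.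
have sk : s k = k by apply: Hfix.
have kE w : g w k = y k (w k) by apply: fix_eq.
case: (pickP (fun k2 => [&& k2 != i, k2 != i' & k2 != k])) => [k2 /and3P[k2i k2i' k2k] | Hn3].
  exfalso.
  have sk2 : s k2 = k2 by apply: Hfix.
  have pE w : (g w k, g w k2) = pprod (y k) (y k2) (w k, w k2).
    by rewrite pprodE /= !fix_eq.
  have Hs2 b1 b2 : exists w, piP i i' w = b1 /\ (w k, w k2) = b2.
    case: b1 b2 => [a1 c1] [a2 c2].
    exists [ffun t => if t == i then a1 else if t == i' then y i c1
                      else if t == k then a2 else c2].
    rewrite /piP !ffunE eqxx i'i eqxx (negbTE ki) (negbTE ki') eqxx.
    by rewrite (negbTE k2i) (negbTE k2i') (negbTE k2k) !permK.
  have := @equiv_prod _ _ g _ _ piE _ _ (fun w => (w k, w k2)) pE Hs2.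
  have := @pprod_bound _ (y k) (y k2) (ltnW (ltnW (ltnW n5))).
  lia.
have l3 : l = 3.
  have : [set: 'I_l] = [set i; i'; k].
    apply/setP => t; rewrite !inE; move: (Hn3 t).
    by case: (t =P i) => //= _; case: (t =P i') => //= _; case: (t =P k).
  move/(congr1 (fun A : {set 'I_l} => #|A|)); rewrite cardsT card_ord => ->.
  rewrite setUC !cardsU1 cards1 !inE (negbTE ii') (negbTE ki) (negbTE ki') /=.
  by [].
right; split => //.
have [c0 _] := card_gt0P (leq_trans (isT : 0 < 5) n5).
have Hs3 b1 b2 : exists w, piP i i' w = b1 /\ w k = b2.
  case: b1 => [a1 c1].
  exists [ffun t => if t == i then a1 else if t == i' then y i c1 else b2].
  by rewrite /piP !ffunE eqxx i'i eqxx (negbTE ki) (negbTE ki') !permK.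
case: (boolP (transitive (y k))) => [tk|/ntrans_ex[a [b nb]]]; last first.
  exfalso.
  have := @equiv_prod _ _ g _ _ piE _ _ (fun w => w k) kE Hs3.
  have := ncycles2 nb; lia.
have Hsl t : exists w, piP i i' w = t /\ w k = c0 by apply: Hs3.
have HS := @slice _ _ g _ _ piE _ (y k) (fun w => w k) c0 kE Hsl (trans_all c0 tk).
rewrite !inE.
have n6 : #|D| != 6.
  apply/eqP => n6; rewrite n6 in HS.
  have := ncycles_pow (Nperm x ^+ 2) 3; rewrite -expgM (_ : (2 * 3 = 6)%N) // => H.
  have H' := leq_trans H HS; have := N2_bound x; rewrite n6 => H6.
  move: (leq_trans H6 H') H4; lia.
have n7 : #|D| != 7.
  apply/eqP => n7; rewrite n7 in HS.
  have := ncycles_pow (Nperm x) 7 => H7.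
  case: (boolP (transitive x)) => [tx|/ntrans_ex[a [b nb]]]; last first.
    have := N_bound2 nb; rewrite n7; lia.
  have HS2 p : p \in [set: D * D] -> ((Nperm x ^+ 7) ^+ 2) p = p.
    move=> _; rewrite -expgM mulnC mul2n Npow_even -n7 !trans_pow //.
    by case: p.
  have H1 := orbit_size (isT : 0 < 2) HS2.
  rewrite cardsT card_prod n7 in H1.
  have H2 : #|porbit (Nperm x ^+ 7) @: [set: D * D]| <= ncycles (Nperm x ^+ 7).
    by apply: subset_leq_card; apply/subsetP => O /imsetP[u _ ->]; rewrite /porbits imset_f.
  move: (leq_trans H1 (leq_mul (leqnn 2) (leq_trans H2 HS))) H4; lia.
move: n6 n7; lia.
Qed.
End Main.

Local Close Scope group_scope.

Lemma bin_ge n k : 0 < k < n -> n <= 'C(n, k).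
Proof.
elim: n k => [|n IH] k; first by case: k => // k; rewrite andbF.
case: k => [//|k] /andP[_ kn]; rewrite ltnS in kn.
rewrite binS.
case: k kn => [|k] kn; first by rewrite bin1 bin0 addn1.
have := IH k.+1; rewrite kn /= => /(_ isT) H.
have : 0 < 'C(n, k.+2) by rewrite bin_gt0.
lia.
Qed.

Lemma card_ksub m k : 5 <= m -> 1 <= k -> k.*2 < m -> 5 <= #|{: ksub m k}|.
Proof.
move=> m5 k1 km.
rewrite card_sig.
have -> : #|[pred A : {set 'I_m} | #|A| == k]| = #|[set A : {set 'I_m} | #|A| == k]|.
  by apply: eq_card => A; rewrite inE.
rewrite card_draws card_ord.
apply: leq_trans m5 (bin_ge _); lia.
Qed.

Section Proj.
Variables (F : finFieldType) (d' : nat).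
Local Open Scope ring_scope.
Import GRing.Theory.
Notation d := d'.+2.

Definition e0 : 'rV[F]_d := delta_mx 0 0.
Definition e1 : 'rV[F]_d := delta_mx 0 (lift 0 0).
Definition vecO (o : option F) : 'rV[F]_d :=
  if o is Some a then e0 + a *: e1 else e1.
Definition Pt (v : 'rV[F]_d) : {set 'rV[F]_d} := [set c *: v | c : F].

Lemma vecO0 o : (vecO o 0 0 = if o is Some _ then 1 else 0)%R.
Proof. by case: o => [a|]; rewrite /= ?mxE /= ?mulr1n ?mulr0n ?mulr0 ?addr0. Qed.

Lemma vecO1 o : (vecO o 0 (lift 0 0) = if o is Some a then a else 1)%R.
Proof. by case: o => [a|]; rewrite /= ?mxE /= ?mulr1n ?mulr0n ?mulr1 ?add0r. Qed.

Lemma vecO_neq0 o : vecO o != 0.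
Proof.
apply/eqP => E; case: o E => [a|] E.
  by move: (vecO0 (Some a)); rewrite E mxE => /eqP; rewrite eq_sym oner_eq0.
by move: (vecO1 None); rewrite E mxE => /eqP; rewrite eq_sym oner_eq0.
Qed.

Lemma Pt_inj o1 o2 : Pt (vecO o1) = Pt (vecO o2) -> o1 = o2.
Proof.
move=> E.
have : vecO o2 \in Pt (vecO o1) by rewrite E; apply/imsetP; exists 1; rewrite ?scale1r.
case/imsetP => c _ Ec.
have E0 := vecO0 o2; have E1 := vecO1 o2.
rewrite Ec mxE vecO0 in E0; rewrite Ec mxE vecO1 in E1.
clear E Ec; case: o1 o2 E0 E1 => [a|] [b|] //= E0 E1.
- by rewrite mulr1 in E0; rewrite -E1 E0 mul1r.
- by move: E1; rewrite mulr1 in E0; rewrite E0 mul0r => /eqP; rewrite eq_sym oner_eq0.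
- by move: E0; rewrite mulr0 => /eqP; rewrite eq_sym oner_eq0.
Qed.

Definition pointO (o : option F) : proj_points F d.
Proof.
exists (Pt (vecO o)); apply/existsP; exists (vecO o); by rewrite vecO_neq0 eqxx.
Defined.

Lemma card_proj : (4 <= #|F|)%N -> (5 <= #|{: proj_points F d}|)%N.
Proof.
move=> F4.
have : (#|{: option F}| <= #|{: proj_points F d}|)%N.
  apply: (@leq_card _ _ pointO) => o1 o2 /(congr1 val) /=; exact: Pt_inj.
by rewrite card_option; apply: leq_trans.
Qed.

End Proj.

Theorem proposition5p2 :
  (forall (m k l : nat) (y : 'I_l -> {perm ksub m k}) (s : {perm 'I_l}),
     (5 <= m)%N -> (1 <= k)%N -> (k.*2 < m)%N -> (1 <= l)%N ->
     (forall i, in_Sym_ksub (y i)) -> s != 1%g ->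
     (ncycles (wr_perm y s) <= 4)%N ->
     prop5p2_concl #|{: ksub m k}| s)
  /\
  (forall (F : finFieldType) (d l : nat) (y : 'I_l -> {perm proj_points F d})
          (s : {perm 'I_l}),
     (2 <= d)%N -> (4 <= #|F|)%N -> (1 <= l)%N ->
     (forall i, in_PGammaL (y i)) -> s != 1%g ->
     (ncycles (wr_perm y s) <= 4)%N ->
     prop5p2_concl #|{: proj_points F d}| s).
Proof.
split.
  move=> m k l y s m5 k1 km _ _ s1 H4.
  apply: (main_comb (y := y)); [exact: (card_ksub m5 k1 km) | exact: s1 | exact: H4].
move=> F d l y s d2 F4 _ _ s1 H4.
move: d2; case: d y H4 => [|[|d']] y H4 // _.
apply: (main_comb (y := y)); [exact: (@card_proj F d' F4) | exact: s1 | exact: H4].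
Qed.
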